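(* For $\lambda\in(0,1)$ and $t\in(0,1)\cup(1,\infty)$ define $\kappa_\lambda(t)=\frac{m_\lambda(t)}{\mathrm{hel}(t)}$. Then for every such $t$ and $\lambda$: (i) $\kappa_\lambda(t)=\kappa_{1-\lambda}(1/t)$; (ii) $L(\lambda)\le\kappa_\lambda(t)\le U(\lambda)$.
   Context: $m_\lambda(t)=\lambda t\ln t-(\lambda t+1-\lambda)\ln(\lambda t+1-\lambda)$ and $\mathrm{hel}(t)=\frac12(\sqrt t-1)^2$ for $t>0$. With $\eta(\lambda)=-\lambda\ln\lambda$, define $L(\lambda)=2\min\{\eta(\lambda),\eta(1-\lambda)\}$ and $U(\lambda)=\frac{2\lambda(1-\lambda)}{1-2\lambda}\ln\frac{1-\lambda}{\lambda}$ for $\lambda\neq 1/2$, with $U(1/2)=1$ (its continuous extension). *)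

(* Defs.v *)
From Stdlib Require Import Reals Lra.
Open Scope R_scope.

Definition m_fun (lam t : R) : R :=
  lam * t * ln t - (lam * t + 1 - lam) * ln (lam * t + 1 - lam).

Definition hel (t : R) : R := / 2 * (sqrt t - 1) ^ 2.

Definition eta (lam : R) : R := - lam * ln lam.

Definition Lb (lam : R) : R := 2 * Rmin (eta lam) (eta (1 - lam)).

Definition Ub (lam : R) : R :=
  if Req_EM_T lam (/ 2) then 1
  else 2 * lam * (1 - lam) / (1 - 2 * lam) * ln ((1 - lam) / lam).

Definition kappa (lam t : R) : R := m_fun lam t / hel t.

(* Main.v *)
Require Import Defs.
From Stdlib Require Import Reals Lra Psatz Classical.
From Coquelicot Require Import Coquelicot.
Open Scope R_scope.

Lemma incr (f df : R -> R) a b : a <= b ->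
  (forall c, a <= c <= b -> is_derive f c (df c)) ->
  (forall c, a < c < b -> 0 <= df c) -> f a <= f b.
Proof.
intros Hab Hd Hs. destruct (Req_dec a b) as [->|Hne]; [lra|].
destruct (MVT_cor2 f df a b) as [c [Hc1 Hc2]]; [lra| |].
- intros c Hc. apply is_derive_Reals. auto.
- specialize (Hs c Hc2). nra.
Qed.

Lemma decr (f df : R -> R) a b : a <= b ->
  (forall c, a <= c <= b -> is_derive f c (df c)) ->
  (forall c, a < c < b -> df c <= 0) -> f b <= f a.
Proof.
intros Hab Hd Hs. destruct (Req_dec a b) as [->|Hne]; [lra|].
destruct (MVT_cor2 f df a b) as [c [Hc1 Hc2]]; [lra| |].
- intros c Hc. apply is_derive_Reals. auto.
- specialize (Hs c Hc2). nra.
Qed.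

Lemma sincr (f df : R -> R) a b : a < b ->
  (forall c, a <= c <= b -> is_derive f c (df c)) ->
  (forall c, a < c < b -> 0 < df c) -> f a < f b.
Proof.
intros Hab Hd Hs.
destruct (MVT_cor2 f df a b) as [c [Hc1 Hc2]]; [lra| |].
- intros c Hc. apply is_derive_Reals. auto.
- specialize (Hs c Hc2). nra.
Qed.

Lemma ln_le_sub1 y : 0 < y -> ln y <= y - 1.
Proof.
intros Hy. pose proof (exp_ineq1_le (ln y)). rewrite exp_ln in H; lra.
Qed.

Lemma sym_m lam t : 0 < lam < 1 -> 0 < t -> m_fun (1 - lam) (/ t) = m_fun lam t / t.
Proof.
intros Hl Ht. unfold m_fun.
replace ((1 - lam) * / t + 1 - (1 - lam)) with ((lam * t + 1 - lam) / t) by (field; lra).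
assert (Hs : 0 < lam * t + 1 - lam) by nra.
rewrite ln_div, ln_Rinv by lra. field. lra.
Qed.

Lemma sym_hel t : 0 < t -> hel (/ t) = hel t / t.
Proof.
intros Ht. unfold hel. rewrite sqrt_inv.
assert (Hq : 0 < sqrt t) by (apply sqrt_lt_R0; lra).
pose proof (sqrt_sqrt t) as E. remember (sqrt t) as q.
rewrite <- E by lra. field. lra.
Qed.

Lemma hel_pos t : 0 < t -> t <> 1 -> 0 < hel t.
Proof.
intros Ht H1. unfold hel. assert (sqrt t <> 1).
{ intro E. apply H1. rewrite <- (sqrt_sqrt t) by lra. rewrite E; ring. }
destruct (Rtotal_order (sqrt t) 1) as [h|[h|h]]; [nra|tauto|nra].
Qed.

Lemma sym_kappa lam t : 0 < lam < 1 -> 0 < t -> t <> 1 -> kappa lam t = kappa (1 - lam) (/ t).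
Proof.
intros Hl Ht H1. unfold kappa. rewrite sym_m, sym_hel by lra.
pose proof (hel_pos t Ht H1). field. lra.
Qed.

Lemma Lb_sym lam : Lb (1 - lam) = Lb lam.
Proof. unfold Lb. replace (1 - (1 - lam)) with lam by ring. now rewrite Rmin_comm. Qed.

Lemma Ub_sym lam : 0 < lam < 1 -> Ub (1 - lam) = Ub lam.
Proof.
intros Hl. unfold Ub.
destruct (Req_EM_T (1 - lam) (/2)); destruct (Req_EM_T lam (/2)); try lra.
replace ((1 - (1 - lam)) / (1 - lam)) with (/ ((1 - lam) / lam)) by (field; lra).
rewrite ln_Rinv by (apply Rdiv_lt_0_compat; lra).
field. lra.
Qed.

Definition s l x := l*x^2 + 1 - l.
Definition F l x := l*x^2*(2*ln x) - s l x * ln (s l x).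
Definition F1 l x := 2*l*x*(2*ln x - ln (s l x)).
Definition F2 l x := 2*l*(2*ln x - ln(s l x)) + 4*l - 4*l^2*x^2/(s l x).
Definition F3 l x := 4*l*(1-l)*(1-l-l*x^2)/(x*(s l x)^2).

Lemma s_pos l x : 0 < l < 1 -> 0 < s l x.
Proof. intros. unfold s. nra. Qed.

Lemma dF l x : 0 < l < 1 -> 0 < x -> is_derive (F l) x (F1 l x).
Proof.
intros Hl Hx. pose proof (s_pos l x Hl). unfold F, F1, s in *.
auto_derive. repeat split; lra. replace (l * (x * (x * 1)) + 1 + - l) with (l*x^2+1-l) by ring. field. lra.
Qed.

Lemma dF1 l x : 0 < l < 1 -> 0 < x -> is_derive (F1 l) x (F2 l x).
Proof.
intros Hl Hx. pose proof (s_pos l x Hl). unfold F1, F2, s in *.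
auto_derive. repeat split; lra. replace (l * (x * (x * 1)) + 1 + - l) with (l*x^2+1-l) by ring. field. lra.
Qed.

Lemma dF2 l x : 0 < l < 1 -> 0 < x -> is_derive (F2 l) x (F3 l x).
Proof.
intros Hl Hx. pose proof (s_pos l x Hl). unfold F2, F3, s in *.
auto_derive. repeat split; lra. replace (l * (x * (x * 1)) + 1 + - l) with (l*x^2+1-l) by ring. field. lra.
Qed.

Definition Q l c u := -2*l*ln(l + (1-l)*u^2) - c*(1-u).
Definition M l c u := c*(l + (1-l)*u^2) - 4*l*(1-l)*u.

Lemma dQ l c u : 0 < l < 1 -> is_derive (Q l c) u (M l c u / (l + (1-l)*u^2)).
Proof.
intros Hl. assert (0 < l + (1-l)*u^2) by nra. unfold Q, M.
auto_derive. lra. field. lra.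
Qed.

Lemma Q_nonneg l c u : 0 < l < 1 -> 0 <= c -> c <= 4*l*(1-l) -> c <= -2*l*ln l ->
  0 <= u <= 1 -> 0 <= Q l c u.
Proof.
intros Hl Hc0 Hc1 Hc2 Hu.
destruct (classic (exists y, 0 < y < u /\ M l c y < 0)) as [[y [Hy HM]]|Hn].
- assert (Q l c 1 <= Q l c u).
  { apply (decr (Q l c) (fun z => M l c z / (l + (1-l)*z^2))); [lra| |].
    + intros; apply dQ; lra.
    + intros z Hz. assert (0 < l + (1-l)*z^2) by nra.
      assert (Hconv : M l c z * (1-y) <= (1-z) * M l c y + (z-y) * M l c 1).
      { unfold M. assert (0 <= c*(1-l)*(z-y)*(1-z)). { apply Rmult_le_pos; [|lra].
          apply Rmult_le_pos; [|lra]. nra. } nra. }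
      assert (M l c 1 <= 0) by (unfold M; lra).
      assert (M l c z <= 0) by nra.
      assert (0 < / (l + (1-l)*z^2)) by (apply Rinv_0_lt_compat; lra). unfold Rdiv; nra. }
  assert (Q l c 1 = 0). { unfold Q. replace (l + (1-l)*1^2) with 1 by ring. rewrite ln_1. ring. }
  lra.
- assert (Q l c 0 <= Q l c u).
  { apply (incr (Q l c) (fun z => M l c z / (l + (1-l)*z^2))); [lra| |].
    + intros; apply dQ; lra.
    + intros z Hz. assert (0 < l + (1-l)*z^2) by nra.
      assert (0 <= M l c z). { destruct (Rle_lt_dec 0 (M l c z)); auto. exfalso; apply Hn; exists z; split; auto. }
      apply Rdiv_le_0_compat; lra. }
  assert (Q l c 0 = -2*l*ln l - c). { unfold Q. replace (l + (1-l)*0^2) with l by ring. ring. }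
  lra.
Qed.

Lemma s1 l : s l 1 = 1. Proof. unfold s; ring. Qed.
Lemma F_1 l : F l 1 = 0. Proof. unfold F. rewrite s1, ln_1. ring. Qed.
Lemma F1_1 l : F1 l 1 = 0. Proof. unfold F1. rewrite s1, ln_1. ring. Qed.

Lemma F1_Q l c x : 0 < l < 1 -> 0 < x -> F1 l x - c*(x-1) = x * Q l c (/x).
Proof.
intros Hl Hx. pose proof (s_pos l x Hl).
unfold F1, Q.
replace (l + (1-l)*(/x)^2) with (s l x / x^2) by (unfold s; field; lra).
rewrite ln_div, ln_pow by (try apply pow_lt; lra). simpl INR. field. lra.
Qed.

Lemma lower_x l c x : 0 < l < 1 -> 0 <= c -> c <= 4*l*(1-l) -> c <= -2*l*ln l ->
  1 <= x -> c*(x-1)^2 <= 2 * F l x.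
Proof.
intros Hl H0 H1 H2 Hx.
assert (E : 2 * F l 1 - c*(1-1)^2 <= 2 * F l x - c*(x-1)^2).
{ apply (incr (fun x => 2 * F l x - c*(x-1)^2) (fun x => 2 * (F1 l x - c*(x-1)))); auto.
  - intros y Hy. pose proof (s_pos l y Hl). unfold F, F1, s in *. auto_derive. repeat split; lra.
    replace (l * (y * (y * 1)) + 1 + - l) with (l*y^2+1-l) by ring. field. lra.
  - intros y Hy. rewrite F1_Q by lra. pose proof (Q_nonneg l c (/y) Hl H0 H1 H2).
    assert (0 <= / y <= 1). { split. left; apply Rinv_0_lt_compat; lra. rewrite <- Rinv_1. apply Rinv_le_contravar; lra. }
    specialize (H H3). nra. }
rewrite F_1 in E. lra.
Qed.

Lemma F2_le l x : /2 <= l < 1 -> 1 <= x -> F2 l x <= 4*l*(1-l).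
Proof.
intros Hl Hx.
assert (F2 l x <= F2 l 1).
{ apply (decr (F2 l) (F3 l)); auto.
  - intros y Hy. apply dF2; lra.
  - intros y Hy. pose proof (s_pos l y (conj (proj1 (conj (Rlt_le_trans 0 (/2) l ltac:(lra) (proj1 Hl)) I)) (proj2 Hl))).
    unfold F3. assert (0 < y * (s l y)^2) by (apply Rmult_lt_0_compat; [lra|apply pow_lt; lra]).
    assert (0 < / (y * (s l y)^2)) by (apply Rinv_0_lt_compat; lra).
    assert (1 - l - l*y^2 <= 0) by nra. unfold Rdiv.
    assert (0 <= 4*l*(1-l)) by nra. 
    assert (4 * l * (1 - l) * (1 - l - l * y ^ 2) <= 0) by nra. nra. }
assert (F2 l 1 = 4*l*(1-l)). { unfold F2. rewrite s1, ln_1. field. }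
lra.
Qed.

Lemma upper_ge_half l c x : /2 <= l < 1 -> 4*l*(1-l) <= c -> 1 <= x -> 2 * F l x <= c*(x-1)^2.
Proof.
intros Hl Hc Hx. assert (Hl' : 0 < l < 1) by lra.
assert (H1 : forall y, 1 <= y -> F1 l y - c*(y-1) <= 0).
{ intros y Hy.
  assert (F1 l y - c*(y-1) <= F1 l 1 - c*(1-1)).
  { apply (decr (fun y => F1 l y - c*(y-1)) (fun y => F2 l y - c)); auto.
    - intros z Hz. apply (is_derive_minus (F1 l) (fun y => c*(y-1))). apply dF1; lra.
      auto_derive; auto; ring.
    - intros z Hz. pose proof (F2_le l z Hl). lra. }
  rewrite F1_1 in H. lra. }
assert (2 * F l x - c*(x-1)^2 <= 2 * F l 1 - c*(1-1)^2).
{ apply (decr (fun x => 2 * F l x - c*(x-1)^2) (fun x => 2 * (F1 l x - c*(x-1)))); auto.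
  - intros y Hy. pose proof (s_pos l y Hl'). unfold F, F1, s in *. auto_derive. repeat split; lra.
    replace (l * (y * (y * 1)) + 1 + - l) with (l*y^2+1-l) by ring. field. lra.
  - intros y Hy. specialize (H1 y ltac:(lra)). lra. }
rewrite F_1 in H. lra.
Qed.

Definition W l x := F1 l x*(x-1) - 2*F l x.
Definition V l x := -(2*ln x - ln (s l x)) + 2*(1-l)*(x-1)/s l x.
Definition K l x := 2*F l x/(x-1)^2.

Ltac fixs l y := try replace (l * (y * (y * 1)) + 1 + - l) with (l*y^2+1-l) by ring.

Lemma dW l x : 0 < l < 1 -> 0 < x -> is_derive (W l) x (2*l*V l x).
Proof.
intros Hl Hx. pose proof (s_pos l x Hl). unfold W, V, F, F1, s in *.
auto_derive. repeat split; lra. fixs l x. field. lra.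
Qed.

Lemma dV l x : 0 < l < 1 -> 0 < x -> is_derive (V l) x (2*(1-l)*(x-1)*(1-l-l*x^2)/(x*(s l x)^2)).
Proof.
intros Hl Hx. pose proof (s_pos l x Hl). unfold V, s in *.
auto_derive. repeat split; lra. fixs l x. field. lra.
Qed.

Lemma dK l x : 0 < l < 1 -> 0 < x -> x <> 1 -> is_derive (K l) x (2*W l x/(x-1)^3).
Proof.
intros Hl Hx H1. assert (x - 1 <> 0) by lra. pose proof (s_pos l x Hl). unfold K, W, F, F1, s in *.
auto_derive. repeat split; try lra. intro E; apply H; nra. fixs l x. field. lra.
Qed.

Lemma s_r l : 0 < l < 1 -> s l ((1-l)/l) = (1-l)/l.
Proof. intros. unfold s. field. lra. Qed.

Lemma W_r l : 0 < l < 1 -> W l ((1-l)/l) = 0.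
Proof.
intros Hl. unfold W, F1, F. rewrite s_r by auto. field. lra.
Qed.

Lemma K_r l : 0 < l < /2 -> K l ((1-l)/l) = 2*l*(1-l)/(1-2*l) * ln ((1-l)/l).
Proof.
intros Hl. unfold K, F. rewrite s_r by lra. field. split; lra.
Qed.

Lemma V_1 l : V l 1 = 0.
Proof. unfold V. rewrite s1, ln_1. field. Qed.

Lemma W_1 l : W l 1 = 0.
Proof. unfold W. rewrite F1_1, F_1. ring. Qed.

Lemma upper_lt_half l x : 0 < l < /2 -> 1 < x -> K l x <= 2*l*(1-l)/(1-2*l) * ln ((1-l)/l).
Proof.
intros Hl Hx. assert (Hl' : 0 < l < 1) by lra.
set (r := (1-l)/l). set (sr := sqrt r).
assert (Hr : 1 < r). { unfold r. apply (Rmult_lt_reg_r l); [lra|]. field_simplify; lra. }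
assert (Hsr2 : sr * sr = r) by (apply sqrt_sqrt; lra).
assert (Hsr1 : 1 < sr). { unfold sr. rewrite <- sqrt_1. apply sqrt_lt_1; lra. }
assert (Hsrr : sr < r) by nra.
assert (Hlr : l * r = 1 - l) by (unfold r; field; lra).
set (Vd := fun x => 2*(1-l)*(x-1)*(1-l-l*x^2)/(x*(s l x)^2)).
assert (Vd_sign : forall y, 1 <= y -> (y <= sr -> 0 <= Vd y) /\ (sr <= y -> Vd y <= 0)).
{ intros y Hy. pose proof (s_pos l y Hl').
  assert (0 < y * (s l y)^2) by (apply Rmult_lt_0_compat; [lra|apply pow_lt; lra]).
  assert (0 < / (y * (s l y)^2)) by (apply Rinv_0_lt_compat; lra).
  unfold Vd, Rdiv. split; intros Hy2.
  - assert (y*y <= r) by nra. assert (0 <= 1 - l - l*y^2) by nra.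
    apply Rmult_le_pos; [|lra]. apply Rmult_le_pos; [|lra]. apply Rmult_le_pos; lra.
  - assert (r <= y*y) by nra. assert (1 - l - l*y^2 <= 0) by nra.
    assert (0 <= 2*(1-l)*(y-1)) by nra.
    assert (2*(1-l)*(y-1)*(1-l-l*y^2) <= 0) by nra. nra. }
assert (dVx : forall y, 1 <= y -> is_derive (V l) y (Vd y)) by (intros; unfold Vd; apply dV; lra).
assert (dWx : forall y, 1 <= y -> is_derive (W l) y (2*l*V l y)) by (intros; apply dW; lra).
assert (Vpos : forall y, 1 <= y <= sr -> 0 <= V l y).
{ intros y Hy. rewrite <- (V_1 l). apply (incr (V l) Vd); try lra.
  intros; apply dVx; lra. intros; apply Vd_sign; lra. }
assert (Vdec : forall y z, sr <= z <= y -> V l y <= V l z).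
{ intros y z Hyz. apply (decr (V l) Vd); try lra.
  intros; apply dVx; lra. intros; apply Vd_sign; lra. }
assert (WA : forall y, r <= y -> W l y <= 0).
{ intros y Hy. rewrite <- (W_r l Hl'). fold r.
  apply (decr (W l) (fun z => 2*l*V l z)); try lra.
  intros; apply dWx; lra.
  intros z Hz. destruct (Rle_lt_dec (V l z) 0) as [h|h]; [nra|exfalso].
  assert (W l 1 <= W l sr).
  { apply (incr (W l) (fun z => 2*l*V l z)); try lra. intros; apply dWx; lra.
    intros w Hw. pose proof (Vpos w ltac:(lra)). nra. }
  assert (W l sr < W l r).
  { apply (sincr (W l) (fun z => 2*l*V l z)); try lra. intros; apply dWx; lra.
    intros w Hw. pose proof (Vdec z w ltac:(lra)). nra. }
  rewrite W_1 in H. pose proof (W_r l Hl'). fold r in H1. lra. }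
assert (WB : forall y, 1 <= y <= r -> 0 <= W l y).
{ intros y Hy. destruct (classic (exists w, 1 < w < y /\ V l w < 0)) as [[w [Hw Hv]]|Hn].
  - assert (sr < w). { destruct (Rle_lt_dec w sr); auto. pose proof (Vpos w ltac:(lra)). lra. }
    rewrite <- (W_r l Hl'). fold r. apply (decr (W l) (fun z => 2*l*V l z)); try lra.
    intros; apply dWx; lra. intros z Hz. pose proof (Vdec z w ltac:(lra)). nra.
  - rewrite <- (W_1 l). apply (incr (W l) (fun z => 2*l*V l z)); try lra.
    intros; apply dWx; lra. intros z Hz. destruct (Rle_lt_dec 0 (V l z)); [nra|].
    exfalso; apply Hn; exists z; split; auto; lra. }
rewrite <- K_r by lra. fold r.
destruct (Rle_lt_dec x r) as [Hxr|Hxr].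
- apply (incr (K l) (fun z => 2*W l z/(z-1)^3)); auto.
  intros; apply dK; lra.
  intros z Hz. pose proof (WB z ltac:(lra)). assert (0 < (z-1)^3) by (apply pow_lt; lra).
  apply Rdiv_le_0_compat; lra.
- apply (decr (K l) (fun z => 2*W l z/(z-1)^3)); try lra.
  intros; apply dK; lra.
  intros z Hz. pose proof (WA z ltac:(lra)). assert (0 < (z-1)^3) by (apply pow_lt; lra).
  assert (0 < /(z-1)^3) by (apply Rinv_0_lt_compat; lra). unfold Rdiv. nra.
Qed.

Lemma ln_neg l : 0 < l < 1 -> ln l < 0.
Proof. intros. rewrite <- ln_1. apply ln_increasing; lra. Qed.


Lemma Lb_props l : 0 < l < 1 -> 0 <= Lb l /\ Lb l <= 4*l*(1-l) /\ Lb l <= -2*l*ln l.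
Proof.
intros Hl. unfold Lb, eta. pose proof (ln_neg l Hl). pose proof (ln_neg (1-l) ltac:(lra)).
split; [|split].
- apply Rmult_le_pos; [lra|]. apply Rmin_glb; nra.
- destruct (Rle_lt_dec l (/2)).
  + assert (- ln (1-l) <= l/(1-l)).
    { rewrite <- ln_Rinv by lra. pose proof (ln_le_sub1 (/(1-l)) ltac:(apply Rinv_0_lt_compat; lra)).
      replace (l/(1-l)) with (/(1-l) - 1) by (field; lra). lra. }
    assert (- (1 - l) * ln (1 - l) <= l).
    { assert (E: (1-l)*(-ln(1-l)) <= (1-l)*(l/(1-l))) by (apply Rmult_le_compat_l; lra).
      replace ((1-l)*(l/(1-l))) with l in E by (field; lra). lra. }
    pose proof (Rmin_r (- l * ln l) (- (1 - l) * ln (1 - l))). nra.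
  + assert (- ln l <= (1-l)/l).
    { rewrite <- ln_Rinv by lra. pose proof (ln_le_sub1 (/l) ltac:(apply Rinv_0_lt_compat; lra)).
      replace ((1-l)/l) with (/l - 1) by (field; lra). lra. }
    assert (- l * ln l <= 1 - l).
    { assert (E: l*(-ln l) <= l*((1-l)/l)) by (apply Rmult_le_compat_l; lra).
      replace (l*((1-l)/l)) with (1-l) in E by (field; lra). lra. }
    pose proof (Rmin_l (- l * ln l) (- (1 - l) * ln (1 - l))). nra.
- pose proof (Rmin_l (- l * ln l) (- (1 - l) * ln (1 - l))). lra.
Qed.

Lemma ln_log_mean r : 0 < r <= 1 -> ln r <= 2*(r-1)/(r+1).
Proof.
intros Hr.
assert (ln r - 2*(r-1)/(r+1) <= ln 1 - 2*(1-1)/(1+1)).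
{ apply (incr (fun r => ln r - 2*(r-1)/(r+1)) (fun r => (r-1)^2/(r*(r+1)^2))); try lra.
  - intros c Hc. auto_derive. repeat split; lra. field. lra.
  - intros c Hc. apply Rdiv_le_0_compat. nra. apply Rmult_lt_0_compat; [lra|nra]. }
rewrite ln_1 in H. lra.
Qed.

Lemma Ub_ge l : /2 <= l < 1 -> 4*l*(1-l) <= Ub l.
Proof.
intros Hl. unfold Ub. destruct (Req_EM_T l (/2)) as [->|Hne]; [lra|].
assert (Hr : 0 < (1-l)/l <= 1).
{ split. apply Rdiv_lt_0_compat; lra. apply (Rmult_le_reg_r l); [lra|]. field_simplify; lra. }
pose proof (ln_log_mean _ Hr).
replace (2*((1-l)/l - 1)/((1-l)/l + 1)) with (2*(1-2*l)) in H by (field; lra).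
assert (1 - 2*l < 0) by lra.
replace (2 * l * (1 - l) / (1 - 2 * l) * ln ((1 - l) / l)) with
  (2 * l * (1 - l) * (ln ((1 - l) / l) / (1 - 2 * l))) by (field; lra).
assert (2 <= ln ((1 - l) / l) / (1 - 2 * l)).
{ assert (/(1-2*l) < 0) by (apply Rinv_lt_0_compat; lra).
  assert (E2 : 2*(1-2*l) * /(1-2*l) = 2) by (field; lra).
  unfold Rdiv. nra. }
assert (0 < 2*l*(1-l)) by nra. nra.
Qed.

Lemma kappa_K l t : 0 < l < 1 -> 1 < t -> kappa l t = K l (sqrt t).
Proof.
intros Hl Ht. set (x := sqrt t).
assert (Hx : 1 < x). { unfold x. rewrite <- sqrt_1. apply sqrt_lt_1; lra. }
assert (Et : t = x^2). { unfold x. simpl. rewrite Rmult_1_r, sqrt_sqrt; lra. }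
unfold kappa, K, hel, m_fun. fold x. rewrite Et. unfold F, s.
rewrite ln_pow by lra. simpl INR. field. lra.
Qed.

Lemma bounds_gt1 l t : 0 < l < 1 -> 1 < t -> Lb l <= kappa l t <= Ub l.
Proof.
intros Hl Ht. rewrite kappa_K by auto. set (x := sqrt t).
assert (Hx : 1 < x). { unfold x. rewrite <- sqrt_1. apply sqrt_lt_1; lra. }
assert (Hp : 0 < (x-1)^2) by (apply pow_lt; lra).
destruct (Lb_props l Hl) as [A [B C]].
split.
- pose proof (lower_x l (Lb l) x Hl A B C ltac:(lra)). unfold K.
  apply (Rmult_le_reg_r ((x-1)^2)); [lra|]. field_simplify; lra.
- destruct (Rlt_le_dec l (/2)).
  + pose proof (upper_lt_half l x ltac:(lra) Hx). unfold Ub.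
    destruct (Req_EM_T l (/2)); [lra|]. lra.
  + pose proof (upper_ge_half l (Ub l) x ltac:(lra) (Ub_ge l ltac:(lra)) ltac:(lra)). unfold K.
    apply (Rmult_le_reg_r ((x-1)^2)); [lra|]. field_simplify; lra.
Qed.

Theorem lemma2 (lam t : R) :
  0 < lam < 1 -> 0 < t -> t <> 1 ->
  kappa lam t = kappa (1 - lam) (/ t) /\
  Lb lam <= kappa lam t <= Ub lam.
Proof.
intros Hl Ht H1. split; [apply sym_kappa; auto|].
destruct (Rtotal_order t 1) as [h|[h|h]]; [|tauto|apply bounds_gt1; auto].
rewrite sym_kappa by auto. rewrite <- Lb_sym, <- (Ub_sym lam Hl).
apply bounds_gt1; [lra|]. rewrite <- Rinv_1. apply Rinv_lt_contravar; lra.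
Qed.
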